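(* Let $f:X\to Y$ be a surjective perfect map from a normal ballean $X$ onto a ballean $Y$. Then $Y$ is normal.
   Context: A ballean is a pair $(X,\mathcal E_X)$ where $X$ is a set and $\mathcal E_X$ is a family of subsets of $X\times X$ (entourages) such that: each $E\in\mathcal E_X$ contains the diagonal; for any $E,F\in\mathcal E_X$ there is $D\in\mathcal E_X$ with $E\circ F^{-1}\subset D$; and $\bigcup\mathcal E_X=X\times X$. For $E\in\mathcal E_X$, $x\in X$, $A\subset X$: $E[x]=\{y:(x,y)\in E\}$, $E[A]=\bigcup_{a\in A}E[a]$. $B\subset X$ is bounded if $B\subset E[x]$ for some $E\in\mathcal E_X$, $x\in X$; $\mathcal B_X$ is the family of bounded sets. Sets $A,B$ are asymptotically disjoint if $E[A]\cap E[B]\in\mathcal B_X$ for all $E\in\mathcal E_X$; $U$ is an asymptotic neighborhood of $A$ if $E[A]\setminus U\in\mathcal B_X$ for all $E$; $X$ is normal if any two asymptotically disjoint sets have disjoint asymptotic neighborhoods. A map $f:X\to Y$ is macro-uniform if for every $E_X\in\mathcal E_X$ there is $E_Y\in\mathcal E_Y$ with $f(E_X[x])\subset E_Y[f(x)]$ for all $x\in X$; proper if $f^{-1}(B)$ is bounded for every bounded $B\subset Y$; closed if for any asymptotically disjoint sets $A,B\subset X$ with $A=f^{-1}(f(A))$ the sets $f(A),f(B)$ are asymptotically disjoint in $Y$; and perfect if it is macro-uniform, closed and proper. *)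

(* Defs.v *)
Set Implicit Arguments.

Definition rel (X : Type) := X -> X -> Prop.
Definition subset (X : Type) := X -> Prop.

Definition rel_inv {X : Type} (F : rel X) : rel X := fun x y => F y x.
Definition rel_comp {X : Type} (E G : rel X) : rel X :=
  fun x y => exists z, G x z /\ E z y.
Definition rel_sub {X : Type} (E F : rel X) : Prop := forall x y, E x y -> F x y.

Record ballean := Ballean {
  carrier :> Type;
  entourage : rel carrier -> Prop;
  ent_diag : forall E, entourage E -> forall x, E x x;
  ent_comp : forall E F, entourage E -> entourage F ->
     exists D, entourage D /\ rel_sub (rel_comp E (rel_inv F)) D;
  ent_cover : forall x y, exists E, entourage E /\ E x y
}.

Section BalleanNotions.
Variable X : ballean.

Definition ball (E : rel X) (x : X) : subset X := fun y => E x y.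
Definition ballA (E : rel X) (A : subset X) : subset X :=
  fun y => exists a, A a /\ E a y.

Definition bounded (B : subset X) : Prop :=
  exists E x, entourage X E /\ forall y, B y -> ball E x y.

Definition asym_disjoint (A B : subset X) : Prop :=
  forall E, entourage X E -> bounded (fun y => ballA E A y /\ ballA E B y).

Definition asym_nbhd (U A : subset X) : Prop :=
  forall E, entourage X E -> bounded (fun y => ballA E A y /\ ~ U y).

Definition normal : Prop :=
  forall A B : subset X, asym_disjoint A B ->
    exists U V : subset X, asym_nbhd U A /\ asym_nbhd V B /\
      (forall x, U x -> V x -> False).
End BalleanNotions.

Arguments bounded {X} B.
Arguments asym_disjoint {X} A B.
Arguments asym_nbhd {X} U A.
Arguments ball {X} E x.
Arguments ballA {X} E A.

Definition image {X Y : Type} (f : X -> Y) (A : X -> Prop) : Y -> Prop :=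
  fun y => exists x, A x /\ f x = y.
Definition preimage {X Y : Type} (f : X -> Y) (B : Y -> Prop) : X -> Prop :=
  fun x => B (f x).

Definition macro_uniform {X Y : ballean} (f : X -> Y) : Prop :=
  forall EX, entourage X EX -> exists EY, entourage Y EY /\
    forall x x', ball EX x x' -> ball EY (f x) (f x').

Definition proper {X Y : ballean} (f : X -> Y) : Prop :=
  forall B : subset Y, bounded B -> bounded (preimage f B).

Definition closed_map {X Y : ballean} (f : X -> Y) : Prop :=
  forall A B : subset X, asym_disjoint A B ->
    (forall x, A x <-> preimage f (image f A) x) ->
    asym_disjoint (image f A) (image f B).

Definition perfect {X Y : ballean} (f : X -> Y) : Prop :=
  macro_uniform f /\ closed_map f /\ proper f.

(* Main.v *)
Require Import Defs.
From Stdlib Require Import Classical.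

Lemma ent_inv (X : ballean) (E : rel X) : entourage X E ->
  exists D, entourage X D /\ forall x y, E x y -> D y x.
Proof.
  intros HE. destruct (ent_comp X E E HE HE) as [D [HD Hs]].
  exists D; split; auto. intros x y Hxy. apply Hs. exists x. split.
  exact Hxy. apply (ent_diag X E HE).
Qed.

Lemma ent_trans (X : ballean) (E F : rel X) : entourage X E -> entourage X F ->
  exists D, entourage X D /\ forall x y z, E x y -> F y z -> D x z.
Proof.
  intros HE HF. destruct (ent_inv X E HE) as [E' [HE' Hi]].
  destruct (ent_comp X F E' HF HE') as [D [HD Hs]].
  exists D; split; auto. intros x y z H1 H2. apply Hs. exists y. split; auto.
  apply Hi; exact H1.
Qed.

Lemma bounded_sub (X : ballean) (A B : subset X) :
  bounded B -> (forall x, A x -> B x) -> bounded A.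
Proof.
  intros [E [x [HE H]]] Hs. exists E, x. split; auto.
Qed.

Lemma bounded_nbhd (X : ballean) (B : subset X) (E : rel X) :
  entourage X E -> bounded B -> bounded (ballA E B).
Proof.
  intros HE [F [x0 [HF H]]].
  destruct (ent_trans X F E HF HE) as [D [HD Ht]].
  exists D, x0. split; auto. intros y [c [Hc Hcy]].
  unfold ball. apply Ht with c; auto. apply H; auto.
Qed.

Lemma nbhd_disj (X : ballean) (A U : subset X) :
  asym_nbhd U A -> asym_disjoint A (fun x => ~ U x).
Proof.
  intros HU E HE.
  destruct (ent_inv X E HE) as [H [HH Hi]].
  destruct (ent_trans X E H HE HH) as [D [HD Ht]].
  apply bounded_sub with (ballA E (fun y => ballA D A y /\ ~ U y)).
  - apply bounded_nbhd; auto.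
  - intros z [[a [Ha Haz]] [c [Hc Hcz]]]. exists c. split.
    + split; auto. exists a. split; auto. apply Ht with z; auto.
    + exact Hcz.
Qed.

Theorem proposition2p3 (X Y : ballean) (f : X -> Y) :
  (forall y : Y, exists x : X, f x = y) ->
  perfect f -> normal X -> normal Y.
Proof.
  intros Hsurj [Hmu [Hcl Hpr]] HN A B HAB.
  assert (Hpre : forall A B : subset Y, asym_disjoint A B ->
     asym_disjoint (preimage f A) (preimage f B)).
  { intros A0 B0 HAB0 E HE.
    destruct (Hmu E HE) as [EY [HEY Hm]].
    apply bounded_sub with (preimage f (fun y => ballA EY A0 y /\ ballA EY B0 y)).
    - apply Hpr. apply HAB0; auto.
    - intros z [[a [Ha Haz]] [b [Hb Hbz]]]. split.
      + exists (f a). split; auto. apply Hm; auto.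
      + exists (f b). split; auto. apply Hm; auto. }
  destruct (HN _ _ (Hpre A B HAB)) as [U' [V' [HU' [HV' Hd]]]].
  assert (Hsat : forall A0 : subset Y, forall x,
     preimage f A0 x <-> preimage f (image f (preimage f A0)) x).
  { intros A0 x. unfold preimage, image. split.
    - intros H. exists x; auto.
    - intros [x' [H1 H2]]. rewrite <- H2. exact H1. }
  assert (Himg : forall A0 : subset Y, forall y, A0 y -> image f (preimage f A0) y).
  { intros A0 y Hy. destruct (Hsurj y) as [x Hx]. exists x. split; auto.
    unfold preimage. rewrite Hx. auto. }
  assert (Key : forall (A0 : subset Y) (U0 : subset X), asym_nbhd U0 (preimage f A0) ->
     asym_nbhd (fun y => ~ image f (fun x => ~ U0 x) y) A0).
  { intros A0 U0 HU0 E HE.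
    pose proof (Hcl _ _ (nbhd_disj X _ _ HU0) (Hsat A0)) as Hc.
    apply bounded_sub with (fun y => ballA E (image f (preimage f A0)) y /\
                                      ballA E (image f (fun x => ~ U0 x)) y).
    - apply Hc; auto.
    - intros y [[a [Ha Hay]] Hn]. apply NNPP in Hn. split.
      + exists a. split; auto.
      + exists y. split; auto. apply (ent_diag Y E HE). }
  exists (fun y => ~ image f (fun x => ~ U' x) y),
         (fun y => ~ image f (fun x => ~ V' x) y).
  split; [apply Key; auto|]. split; [apply Key; auto|].
  intros y H1 H2. destruct (Hsurj y) as [x Hx].
  apply (Hd x).
  - apply NNPP. intro Hn. apply H1. exists x. auto.
  - apply NNPP. intro Hn. apply H2. exists x. auto.
Qed.
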